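(* Let $G=(V,E)$ be a finite simple connected graph with $n\ge2$ nodes, $0\le t<\kappa(G)$, and $R=\mathrm{radius}(G,t)$. Let $\varphi\in\Phi^{(t)}_{\mathrm{all}}$ be such that (1) at most one node crashes at round $1$ in $\varphi$, and (2) if some node $v$ crashes at round $1$ in $\varphi$, then $\varphi\in\Phi^\star_v$. Then for every successor $\varphi'$ of $\varphi$ (with respect to any node crashing last in $\varphi$, and any admissible choice of witness): (a) at most one node crashes at round $1$ in $\varphi'$; (b) if some node $v$ crashes at round $1$ in $\varphi'$, then $v$ crashes at round $1$ in $\varphi$; (c) there exists a node that is correct in both $\varphi$ and $\varphi'$ and satisfies $\mathrm{view}(w,R-1,\varphi)=\mathrm{view}(w,R-1,\varphi')$.
   Context: $\kappa(G)$ is the vertex connectivity of $G$; $N(v)$ the neighbourhood of $v$. Synchronous rounds; in each round each node sends a message to every neighbour. Failure patterns. A failure pattern is a set $\varphi=\{(v,F_v,f_v): v\in F\}$ with $F\subseteq V$, $|F|\le t$, integers $f_v\ge1$ and nonempty $F_v\subseteq N(v)$: $v$ acts normally in rounds $<f_v$, in round $f_v$ (the round at which $v$ crashes) its messages reach exactly $N(v)\setminus F_v$, and afterwards it sends nothing. Nodes in $F$ are faulty, the others correct. $\Phi^{(t)}_{\mathrm{all}}$ is the set of all failure patterns with at most $t$ faulty nodes. Causal paths, eccentricity, radius. A causal path w.r.t. $\varphi$ from $v$ to $v'$ is $u_1=v,\dots,u_q=v'$ with $u_{i+1}\in N(u_i)$, $u_i$ not crashed during rounds $1,\dots,i-1$,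 and $u_{i+1}\notin F_{u_i}$ if $u_i$ crashes at round $i$; length $q-1$. $\mathrm{ecc}(v,\varphi)$ is the maximum over correct $v'$ of the minimum length of a causal path from $v$ to $v'$ ($\infty$ if none exists for some correct $v'$). $\Phi^\star_v=\{\varphi\in\Phi^{(t)}_{\mathrm{all}}:\mathrm{ecc}(v,\varphi)<\infty\}$; $\mathrm{radius}(G,t)=\min_{v}\max_{\varphi\in\Phi^\star_v}\mathrm{ecc}(v,\varphi)$. Views. With inputs $x_u$ and flooding (each node sends $(u,x_u)$ in round 1 and forwards all known pairs thereafter), $\mathrm{view}(w,r,\varphi)$ is the set of pairs $(u,x_u)$ with $u=w$ or with a causal path w.r.t. $\varphi$ of length at most $r$ from $u$ to $w$. Successor. A node $u$ crashes last in $\varphi$ if $(u,F_u,f_u)\in\varphi$ and $f_u\ge f_v$ for all $(v,F_v,f_v)\in\varphi$. For such $u$, a successor of $\varphi$ w.r.t. $u$ is $\varphi'=(\varphi\setminus\{(u,F_u,f_u)\})\cup\{(u,F'_u,f'_u)\}$ where: (Case 1) if $F_u$ contains only faulty nodes of $\varphi$, then $f'_u=f_u+1$ and $F'_u=N(u)\setminus\{w\}$ for some correct neighbour $w$ of $u$; (Case 2) if $F_u$ contains exactly one correct node $w$ of $\varphi$, then $f'_u=f_u+1$ and $F'_u=N(u)$; (Case 3) if $F_u$ contains at least two correct nodes of $\varphi$, then $f'_u=f_u$ and $F'_u=F_u\setminus\{w\}$ for some correct $w\in F_u$. The node $w$ is called the witness. *)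

(* Defs.v *)
From mathcomp Require Import all_boot.
Set Implicit Arguments. Unset Strict Implicit. Unset Printing Implicit Defensive.

Section Defs.
Variable T : finType.
Variable e : rel T. (* adjacency of a simple graph: symmetric, irreflexive *)

Definition nbhd (v : T) : {set T} := [set y | e v y].

(* the subgraph induced by A is connected (empty / singleton count as connected) *)
Definition induced_connected (A : {set T}) : bool :=
  [forall x in A, forall y in A,
     connect (fun a b => [&& a \in A, b \in A & e a b]) x y].

Definition graph_connected : bool := induced_connected setT.

Definition vertex_cut (S : {set T}) : bool :=
  ~~ induced_connected (~: S) || (#|~: S| <= 1).

(* kappa(G): minimum size of such an S (S = setT always qualifies) *)
Definition kappa : nat := \big[minn/#|T|]_(S : {set T} | vertex_cut S) #|S|.

(* A failure pattern: phi v = Some (F_v, f_v) iff v is faulty *)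
Definition pattern := T -> option ({set T} * nat).

Definition faulty (phi : pattern) (v : T) : bool := phi v != None.

Definition crashes_at (phi : pattern) (v : T) (k : nat) : bool :=
  if phi v is Some (_, f) then f == k else false.

Definition valid_pattern (t : nat) (phi : pattern) : Prop :=
  #|[set v | faulty phi v]| <= t /\
  (forall v F f, phi v = Some (F, f) ->
     [/\ 0 < f, F != set0 & F \subset nbhd v]).

(* x has not crashed during rounds 1..i-1 *)
Definition alive (phi : pattern) (x : T) (i : nat) : bool :=
  if phi x is Some (_, f) then i <= f else true.

Definition sends (phi : pattern) (x : T) (i : nat) (y : T) : bool :=
  if phi x is Some (F, f) then (f == i) ==> (y \notin F) else true.

(* cpath phi i x s : the sequence x :: s = u_i, u_{i+1}, ... satisfies the
   causal path conditions, x being the i-th node of the path *)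
Fixpoint cpath (phi : pattern) (i : nat) (x : T) (s : seq T) {struct s} : bool :=
  alive phi x i &&
  (if s is y :: s' then [&& e x y, sends phi x i y & cpath phi i.+1 y s']
   else true).

Definition cpath_len (phi : pattern) (u w : T) (k : nat) : bool :=
  [exists s : k.-tuple T, cpath phi 1 u s && (last u s == w)].

Definition cpath_le (phi : pattern) (u w : T) (r : nat) : bool :=
  [exists k : 'I_r.+1, cpath_len phi u w k].

Definition ecc_le (phi : pattern) (v : T) (k : nat) : Prop :=
  forall v', ~~ faulty phi v' -> cpath_le phi v v' k.

Definition in_Phi_star (t : nat) (v : T) (phi : pattern) : Prop :=
  valid_pattern t phi /\ exists k, ecc_le phi v k.

Definition max_ecc_le (t : nat) (v : T) (k : nat) : Prop :=
  forall phi, in_Phi_star t v phi -> ecc_le phi v k.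

Definition is_radius (t R : nat) : Prop :=
  (exists v, max_ecc_le t v R) /\
  (forall v k, max_ecc_le t v k -> R <= k).

Definition fround (phi : pattern) (v : T) : nat :=
  if phi v is Some (_, f) then f else 0.

Definition crashes_last (phi : pattern) (u : T) : Prop :=
  faulty phi u /\ forall v, faulty phi v -> fround phi v <= fround phi u.

Definition successor (phi : pattern) (u w : T) (phi' : pattern) : Prop :=
  crashes_last phi u /\
  exists F f, phi u = Some (F, f) /\
    (forall v, v != u -> phi' v = phi v) /\
    [\/
        [/\ {in F, forall y, faulty phi y}, ~~ faulty phi w, e u w &
            phi' u = Some (nbhd u :\ w, f.+1)],
        [set y in F | ~~ faulty phi y] = [set w] /\
            phi' u = Some (nbhd u, f.+1)
      |
        [/\ 1 < #|[set y in F | ~~ faulty phi y]|, w \in F, ~~ faulty phi w &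
            phi' u = Some (F :\ w, f)]].

(* view(w, r, phi) for inputs x : T -> X, as a predicate on pairs *)
Definition view (X : eqType) (x : T -> X) (w : T) (r : nat) (phi : pattern)
  : pred (T * X) :=
  fun p => (p.2 == x p.1) && ((p.1 == w) || cpath_le phi p.1 w r).

End Defs.

(* Main.v *)
Require Import Defs.
From mathcomp Require Import all_boot zify.
From Stdlib Require Import Classical.
Set Implicit Arguments. Unset Strict Implicit. Unset Printing Implicit Defensive.

Section Gen.
Variable T : finType.
Variable e : rel T.

Lemma cpath_alive (phi : pattern T) i x s : cpath e phi i x s -> alive phi x i.
Proof. by case: s => [|y s] /= /andP[]. Qed.

Lemma cpath_cat (phi : pattern T) i x s1 s2 :
  cpath e phi i x s1 -> cpath e phi (i + size s1) (last x s1) s2 ->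
  cpath e phi i x (s1 ++ s2).
Proof.
elim: s1 i x => [|y s1 IH] i x /=; first by rewrite addn0.
case/andP=> ->; case/and3P=> -> -> H1 H2 /=.
by apply: IH; rewrite // addSnnS.
Qed.

Lemma cpath_leP (phi : pattern T) u w r :
  reflect (exists s, [/\ size s <= r, cpath e phi 1 u s & last u s = w])
          (cpath_le e phi u w r).
Proof.
apply: (iffP existsP).
  case=> k /existsP [s /andP[Hc /eqP Hl]].
  exists (tval s); split=> //; by rewrite size_tuple -ltnS.
case=> s [Hs Hc Hl].
have Hk : size s < r.+1 by [].
exists (Ordinal Hk); apply/existsP; exists (in_tuple s) => /=.
by rewrite Hc Hl eqxx.
Qed.

End Gen.

Section Core.
Variable T : finType.
Variable e : rel T.
Hypothesis e_sym : symmetric e.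
Variables (phi phi' : pattern T) (u w : T) (f q : nat).
Hypothesis h_fault : forall v, faulty phi' v = faulty phi v.
Hypothesis h_q : f.+1 <= q.
Hypothesis h_late : forall y k, f.+2 <= k -> alive phi' y k -> ~~ faulty phi y.
Hypothesis h_malive : forall x i, alive phi x i -> alive phi' x i.
Hypothesis h_msends : forall x i y, alive phi x i -> sends phi x i y -> sends phi' x i y.
Hypothesis h_step : forall x i y, alive phi' x i -> e x y -> sends phi' x i y ->
  alive phi' y i.+1 -> ~~ (alive phi x i && sends phi x i y) -> y = w /\ i.+1 = q.
Hypothesis h_adiff : forall x i, alive phi' x i -> ~~ alive phi x i -> faulty phi x.
Hypothesis h_w : ~~ faulty phi w.

Lemma cpath_nil (psi : pattern T) i x : cpath e psi i x [::] = alive psi x i.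
Proof. by rewrite /= andbT. Qed.
Lemma cpath_cons (psi : pattern T) i x y s : cpath e psi i x (y :: s) =
  alive psi x i && [&& e x y, sends psi x i y & cpath e psi i.+1 y s].
Proof. by []. Qed.

Definition Ec a b := [&& e a b, ~~ faulty phi a & ~~ faulty phi b].

Lemma correct_alive (psi : pattern T) c i : ~~ faulty psi c -> alive psi c i.
Proof. by rewrite /faulty /alive; case: (psi c). Qed.

Lemma correct_sends (psi : pattern T) c i y : ~~ faulty psi c -> sends psi c i y.
Proof. by rewrite /faulty /sends; case: (psi c). Qed.

Lemma walk_cpath c s i : ~~ faulty phi c -> path Ec c s -> cpath e phi i c s.
Proof.
elim: s c i => [|y s IH] c i Hc; first by rewrite cpath_nil correct_alive.
rewrite cpath_cons; case/andP=> /and3P[Hcy _ Hy] Hp.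
by rewrite correct_alive // Hcy correct_sends //= IH.
Qed.

Lemma mono s i x : cpath e phi i x s -> cpath e phi' i x s.
Proof.
elim: s i x => [|y s IH] i x; rewrite ?cpath_nil ?cpath_cons; first exact: h_malive.
case/andP=> Ha /and3P[-> Hs Hc].
by rewrite h_malive // h_msends // IH.
Qed.

Lemma late s j x : f.+1 <= j -> ~~ faulty phi x -> cpath e phi' j x s -> path Ec x s.
Proof.
elim: s j x => [|y s IH] j x Hj Hx //.
rewrite cpath_cons; case/andP=> _ /and3P[Hxy _ Hc].
have Hy : ~~ faulty phi y by apply: (h_late (k := j.+1)) => //; exact: cpath_alive Hc.
apply/andP; split; first by rewrite /Ec Hxy Hx Hy.
by apply: (IH j.+1) => //; apply: leqW.
Qed.

Lemma diff s i x : cpath e phi' i x s -> ~~ faulty phi (last x s) ->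
  ~~ cpath e phi i x s ->
  exists s2, [/\ path Ec w s2, last w s2 = last x s & i + size s = q + size s2].
Proof.
elim: s i x => [|y s IH] i x; rewrite ?cpath_nil ?cpath_cons /=.
  by move=> Ha Hx Hn; move: (h_adiff Ha Hn); rewrite (negbTE Hx).
case/andP=> Ha /and3P[Hxy Hs Hc] Hl Hn.
case Hc0: (cpath e phi i.+1 y s).
  have Hn2 : ~~ (alive phi x i && sends phi x i y).
    by apply: contra Hn => /andP[-> ->]; rewrite Hxy Hc0.
  have [Hyw Hq] := h_step Ha Hxy Hs (cpath_alive Hc) Hn2.
  rewrite Hyw in Hc Hl *.
  exists s; split=> //; last by rewrite addnS -Hq.
  apply: (late (j := q)) => //. by rewrite -Hq.
have [s2 [H1 H2 H3]] := IH _ _ Hc Hl (negbT Hc0).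
by exists s2; split=> //; rewrite addnS -addSn.
Qed.


Hypothesis h_reach : forall o, exists s,
  [/\ cpath e phi 1 o s, ~~ faulty phi (last o s) & size s <= f].
Variable r : nat.

Lemma Ec_sym : symmetric Ec.
Proof. by move=> a b; rewrite /Ec e_sym; case: (e b a); case: (faulty phi a); case: (faulty phi b). Qed.

Lemma rev_walk c s2 : path Ec w s2 -> last w s2 = c ->
  [/\ path Ec c (rev (belast w s2)), last c (rev (belast w s2)) = w &
      size (rev (belast w s2)) = size s2].
Proof.
move=> Hp Hl; split.
- rewrite -Hl rev_path; apply: sub_path Hp => a b; by rewrite Ec_sym.
- case: s2 Hp Hl => [|y s2] _ /=; first by move=> ->.
  by move=> _; rewrite rev_cons last_rcons.
- by rewrite size_rev size_belast.
Qed.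

Definition nearw (c : T) : Prop := exists s2 : seq T, [/\ path Ec w s2, last w s2 = c & q + size s2 <= r.+1].

Theorem core : exists w0, ~~ faulty phi w0 /\
  forall o, cpath_le e phi o w0 r = cpath_le e phi' o w0 r.
Proof.
have monole : forall o w0, cpath_le e phi o w0 r -> cpath_le e phi' o w0 r.
  move=> o w0 /cpath_leP [s [Hs Hc Hl]]; apply/cpath_leP; exists s; split=> //.
  exact: mono.
case: (classic (forall c, ~~ faulty phi c -> nearw c)) => [Hall|Hnot].
  exists w; split=> // o.
  have full : cpath_le e phi o w r.
    have [s1 [Hc1 Hl1 Hs1]] := h_reach o.
    have [s2 [Hp2 Hl2 Hs2]] := Hall _ Hl1.
    have [Hp3 Hl3 Hs3] := rev_walk Hp2 Hl2.
    apply/cpath_leP; exists (s1 ++ rev (belast w s2)); split.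
    - rewrite size_cat Hs3; move: Hs1 Hs2 h_q; clear; move=> *; lia.
    - apply: cpath_cat => //; exact: walk_cpath.
    - by rewrite last_cat.
  by rewrite full; symmetry; apply: monole.
have [c Hc] : exists c, ~ (~~ faulty phi c -> nearw c).
  by apply: not_all_ex_not.
have Hcf : ~~ faulty phi c.
  by case Hf: (faulty phi c) => //; exfalso; apply: Hc; rewrite Hf.
have Hnc : ~ nearw c by move=> H; apply: Hc.
exists c; split=> // o; apply/idP/idP; first exact: monole.
case/cpath_leP=> s [Hs Hc' Hl].
case Hp: (cpath e phi 1 o s); first by apply/cpath_leP; exists s.
have [s2 [H1 H2 H3]] := diff Hc' (ltac:(by rewrite Hl)) (negbT Hp).
exfalso; apply: Hnc; exists s2; split=> //; first by rewrite H2.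
by rewrite -H3 add1n ltnS.
Qed.

End Core.

Section Reach.
Variable T : finType.
Variable e : rel T.
Hypothesis e_irr : irreflexive e.

Lemma kappa_le (S : {set T}) : vertex_cut e S -> kappa e <= #|S|.
Proof.
move=> H; rewrite /kappa.
have gen : forall r : seq {set T}, S \in r ->
   \big[minn/#|T|]_(i <- r | vertex_cut e i) #|i| <= #|S|.
  elim=> [|y r IH] //; rewrite in_cons big_cons => /orP[/eqP <-|Hr].
    by rewrite H geq_minl.
  case: (vertex_cut e y); last exact: IH.
  by apply: leq_trans (geq_minr _ _) (IH Hr).
by apply: gen; rewrite mem_index_enum.
Qed.

Lemma kappa_leT : kappa e <= #|T|.
Proof.
have H : vertex_cut e [set: T].
  by rewrite /vertex_cut setCT cards0 orbT.
by apply: leq_trans (kappa_le H) _; rewrite cardsT.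
Qed.

Variables (phi : pattern T) (t : nat).
Hypothesis hcard : #|[set v | faulty phi v]| <= t.
Hypothesis hkappa : t < kappa e.

Lemma exists_correct : exists c, ~~ faulty phi c.
Proof.
case: (pickP (fun c => ~~ faulty phi c)) => [c Hc|Hall]; first by exists c.
have : [set v | faulty phi v] = [set: T].
  by apply/setP=> v; rewrite !inE; move: (Hall v) => /negbFE ->.
move=> Heq; move: hcard; rewrite Heq cardsT => H.
by move: (leq_ltn_trans H (leq_trans hkappa kappa_leT)); rewrite ltnn.
Qed.

Lemma correct_nbr o : faulty phi o -> exists c, e o c && ~~ faulty phi c.
Proof.
move=> Ho; case: (pickP (fun c => e o c && ~~ faulty phi c)) => [c Hc|Hall]; first by exists c.
have Hn : forall c, e o c -> faulty phi c.
  by move=> c Hc; move: (Hall c); rewrite Hc /= => /negbFE.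
have [c0 Hc0] := exists_correct.
have Hcut : vertex_cut e (nbhd e o).
  rewrite /vertex_cut; apply/orP; left.
  apply/negP => /forallP /(_ o) /implyP Hoo.
  have Ho' : o \in ~: nbhd e o by rewrite !inE e_irr.
  move: (Hoo Ho') => /forallP /(_ c0) /implyP Hc.
  have Hc0' : c0 \in ~: nbhd e o.
    by rewrite !inE; apply/negP => /Hn; rewrite (negbTE Hc0).
  case/connectP: (Hc Hc0') => p.
  case: p => [|z p] /=.
    by move=> _ Heq; move: Ho; rewrite -Heq (negbTE Hc0).
  by case/andP=> /and3P[_ Hz Hoz] _ _; move: Hz; rewrite !inE Hoz.
have Hprop : nbhd e o \proper [set v | faulty phi v].
  apply/properP; split.
    by apply/subsetP=> v; rewrite !inE => /Hn.
  by exists o; rewrite !inE ?e_irr.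
have := kappa_le Hcut; have := proper_card Hprop; move: hcard hkappa; clear; lia.
Qed.

Variable f : nat.
Hypothesis hlast : forall v F g, phi v = Some (F, g) -> g <= f.

Lemma truncate s i x : cpath e phi i x s -> ~~ faulty phi (last x s) ->
  exists s1, [/\ cpath e phi i x s1, ~~ faulty phi (last x s1) &
                 i + size s1 <= maxn i f.+1].
Proof.
elim: s i x => [|y s IH] i x Hc Hl.
  by exists [::]; split=> //=; rewrite addn0 leq_maxl.
case Hx: (faulty phi x).
  have Ha := cpath_alive Hc.
  move: Hc; rewrite cpath_cons => /andP[_ /and3P[Hxy Hs Hc]].
  have [s1 [H1 H2 H3]] := IH _ _ Hc Hl.
  have Hif : i <= f.
    move: Hx Ha; rewrite /faulty /alive; case Hp: (phi x) => [[F g]|] //= _ Hig.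
    exact: leq_trans Hig (hlast Hp).
  exists (y :: s1); split=> //.
    by rewrite cpath_cons Ha Hxy Hs H1.
  move: H3 Hif; rewrite /=; clear; move=> *; lia.
exists [::]; split.
- by rewrite cpath_nil (cpath_alive Hc).
- by rewrite /= Hx.
- by rewrite addn0 leq_maxl.
Qed.

Hypothesis hvalid : forall v F g, phi v = Some (F, g) -> 0 < g.
Hypothesis H2 : forall v, crashes_at phi v 1 -> in_Phi_star e t v phi.

Lemma reach_correct o : exists s, cpath e phi 1 o s && ~~ faulty phi (last o s).
Proof.
case Ho: (faulty phi o); last first.
  exists [::]; rewrite cpath_nil correct_alive; first by rewrite /= Ho.
  by rewrite Ho.
case Hp: (phi o) => [[F g]|]; last by move: Ho; rewrite /faulty Hp.
have g0 := hvalid Hp.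
case: (ltnP 1 g) => Hg.
  have [c /andP[Hoc Hc]] := correct_nbr Ho.
  exists [:: c]; rewrite cpath_cons cpath_nil Hoc (@correct_alive _ phi c 2 Hc) /= Hc !andbT.
  rewrite /alive /sends Hp; apply/andP; split; first by move: g0; clear; lia.
  by apply/implyP => /eqP Hg1; move: Hg; rewrite Hg1.
have Hcr : crashes_at phi o 1 by rewrite /crashes_at Hp; apply/eqP; lia.
have [_ [k Hk]] := H2 Hcr.
have [c0 Hc0] := exists_correct.
case/cpath_leP: (Hk _ Hc0) => s [_ Hs Hl].
by exists s; rewrite Hs Hl.
Qed.

Lemma reach_f o : exists s, [/\ cpath e phi 1 o s, ~~ faulty phi (last o s) & size s <= f].
Proof.
have [s /andP[Hs Hl]] := reach_correct o.
have [s1 [H1 H2' H3]] := truncate Hs Hl.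
by exists s1; split=> //; move: H3; clear; move=> *; lia.
Qed.

End Reach.

Section Finish.
Variable T : finType.
Variable e : rel T.
Hypothesis e_sym : symmetric e.
Variables (phi phi' : pattern T) (u w : T) (F F' : {set T}) (f g q : nat).
Hypothesis Hu : phi u = Some (F, f).
Hypothesis Hu' : phi' u = Some (F', g).
Hypothesis Hsame : forall v, v != u -> phi' v = phi v.
Hypothesis hlast : forall v F g, phi v = Some (F, g) -> g <= f.
Hypothesis hfg : f <= g <= f.+1.
Hypothesis hg1 : g = 1 -> f = 1.
Hypothesis hq : f.+1 <= q.
Hypothesis hsu : forall i y, i <= f -> sends phi u i y -> sends phi' u i y.
Hypothesis hstu : forall i y, alive phi' u i -> e u y -> sends phi' u i y ->
  alive phi' y i.+1 -> ~~ (alive phi u i && sends phi u i y) -> y = w /\ i.+1 = q.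
Hypothesis h_w : ~~ faulty phi w.
Hypothesis h_reach : forall o, exists s,
  [/\ cpath e phi 1 o s, ~~ faulty phi (last o s) & size s <= f].

Lemma hfault v : faulty phi' v = faulty phi v.
Proof.
case: (eqVneq v u) => [->|Hv]; first by rewrite /faulty Hu Hu'.
by rewrite /faulty Hsame.
Qed.

Lemma hcrash v : crashes_at phi' v 1 -> crashes_at phi v 1.
Proof.
case: (eqVneq v u) => [->|Hv]; last by rewrite /crashes_at Hsame.
by rewrite /crashes_at Hu Hu' => /eqP /hg1 ->.
Qed.

Lemma finish (X : eqType) (x : T -> X) r :
  [/\ #|[set v | crashes_at phi' v 1]| <= #|[set v | crashes_at phi v 1]|,
      (forall v, crashes_at phi' v 1 -> crashes_at phi v 1) &
      exists w0, [/\ ~~ faulty phi w0, ~~ faulty phi' w0 &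
                     view e x w0 r phi =1 view e x w0 r phi']].
Proof.
split.
- by apply: subset_leq_card; apply/subsetP=> v; rewrite !inE; exact: hcrash.
- exact: hcrash.
have h_late : forall y k, f.+1 < k -> alive phi' y k -> ~~ faulty phi y.
  move=> y k Hk; case: (eqVneq y u) => [->|Hy].
    by rewrite /alive Hu' => Hkg; move: hfg Hk Hkg; clear; lia.
  rewrite /alive Hsame // /faulty; case Hp: (phi y) => [[F0 g0]|] //.
  by move=> Hkg; move: (hlast Hp) Hk Hkg; clear; lia.
have h_malive : forall y i, alive phi y i -> alive phi' y i.
  move=> y i; case: (eqVneq y u) => [->|Hy]; last by rewrite /alive Hsame.
  by rewrite /alive Hu Hu'; move: hfg; clear; lia.
have h_msends : forall y i z, alive phi y i -> sends phi y i z -> sends phi' y i z.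
  move=> y i z; case: (eqVneq y u) => [->|Hy]; last by rewrite /sends Hsame.
  by rewrite {1}/alive Hu; apply: hsu.
have h_step : forall y i z, alive phi' y i -> e y z -> sends phi' y i z ->
    alive phi' z i.+1 -> ~~ (alive phi y i && sends phi y i z) -> z = w /\ i.+1 = q.
  move=> y i z; case: (eqVneq y u) => [->|Hy]; first exact: hstu.
  by rewrite /alive /sends (Hsame Hy) => Ha _ Hs _; rewrite Ha Hs.
have h_adiff : forall y i, alive phi' y i -> ~~ alive phi y i -> faulty phi y.
  move=> y i; case: (eqVneq y u) => [->|Hy]; first by rewrite /faulty Hu.
  by rewrite /alive Hsame // => ->.
have [w0 [Hw0 Heq]] := core e_sym hq h_late h_malive h_msends h_step h_adiff h_w h_reach r.
exists w0; split=> //; first by rewrite hfault.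
by move=> p; rewrite /view Heq.
Qed.

End Finish.
Unset Implicit Arguments.

Theorem mainTheorem5 (T : finType) (e : rel T)
  (e_sym : symmetric e) (e_irr : irreflexive e)
  (G_conn : graph_connected e) (n_ge2 : 1 < #|T|)
  (t : nat) (t_lt_kappa : t < kappa e)
  (R : nat) (R_radius : is_radius e t R)
  (X : eqType) (x : T -> X)
  (phi : pattern T) (phi_valid : valid_pattern e t phi)
  (H1 : #|[set v | crashes_at phi v 1]| <= 1)
  (H2 : forall v, crashes_at phi v 1 -> in_Phi_star e t v phi) :
  forall (u w : T) (phi' : pattern T), successor e phi u w phi' ->
    [/\ #|[set v | crashes_at phi' v 1]| <= 1,
        (forall v, crashes_at phi' v 1 -> crashes_at phi v 1) &
        exists w0, [/\ ~~ faulty phi w0, ~~ faulty phi' w0 &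
                       view e x w0 R.-1 phi =1 view e x w0 R.-1 phi']].
Proof.
move=> u w phi' [[Hfu Hlast] [F [f [Hu [Hsame Hcases]]]]].
have [Hcard Hval] := phi_valid.
have hvalid : forall v F g, phi v = Some (F, g) -> 0 < g.
  by move=> v F0 g Hv; case: (Hval _ _ _ Hv).
have f0 : 0 < f := hvalid _ _ _ Hu.
have hlast : forall v F0 g, phi v = Some (F0, g) -> g <= f.
  move=> v F0 g Hv; have := Hlast v; rewrite /faulty /fround Hv Hu; by apply.
have h_reach := reach_f e_irr Hcard t_lt_kappa hlast hvalid H2.
have hdead : forall y, y != u -> faulty phi y -> ~~ alive phi' y f.+1.
  move=> y Hy; rewrite /faulty /alive Hsame //; case Hp: (phi y) => [[F0 g0]|] // _.
  by move: (hlast _ _ _ Hp); clear; lia.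
have Hne : forall y, e u y -> y != u.
  by move=> y Hy; apply/eqP => Hyu; move: Hy; rewrite Hyu e_irr.
case: Hcases => [[HF Hw Huw Hu']|[HF Hu']|[HF HwF Hw Hu']].
- have hsu : forall i y, i <= f -> sends phi u i y -> sends phi' u i y.
    move=> i y Hi _; rewrite /sends Hu'.
    by apply/implyP => /eqP Hfi; move: Hi; rewrite -Hfi ltnn.
  have hstu : forall i y, alive phi' u i -> e u y -> sends phi' u i y ->
      alive phi' y i.+1 -> ~~ (alive phi u i && sends phi u i y) -> y = w /\ i.+1 = f.+2.
    move=> i y Hi Huy Hs Hal Hn.
    rewrite /alive Hu' in Hi.
    case: (leqP i f) => Hif.
      have Ha : alive phi u i by rewrite /alive Hu.
      rewrite Ha /sends Hu /= negb_imply in Hn; case/andP: Hn => /eqP Hfi /negbNE HyF.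
      by move: (hdead _ (Hne _ Huy) (HF _ HyF)); rewrite Hfi Hal.
    have Hi1 : i = f.+1 by apply/eqP; rewrite eqn_leq Hi Hif.
    rewrite /sends Hu' Hi1 eqxx /= in Hs; split; last by rewrite Hi1.
    by apply/eqP; move: Hs; rewrite !inE Huy andbT negbK.
  have hfg : f <= f.+1 <= f.+1 by rewrite leqnSn leqnn.
  have hg1 : f.+1 = 1 -> f = 1 by move=> [] H0; move: f0; rewrite H0.
  have [Ha Hb Hc] := finish e_sym Hu Hu' Hsame hlast hfg hg1 (leqnSn _) hsu hstu
    Hw h_reach x R.-1.
  by split=> //; apply: leq_trans Ha H1.
- have Hw : ~~ faulty phi w.
    have : w \in [set y in F | ~~ faulty phi y] by rewrite HF inE.
    by rewrite inE => /andP[].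
  have hsu : forall i y, i <= f -> sends phi u i y -> sends phi' u i y.
    move=> i y Hi _; rewrite /sends Hu'.
    by apply/implyP => /eqP Hfi; move: Hi; rewrite -Hfi ltnn.
  have hstu : forall i y, alive phi' u i -> e u y -> sends phi' u i y ->
      alive phi' y i.+1 -> ~~ (alive phi u i && sends phi u i y) -> y = w /\ i.+1 = f.+1.
    move=> i y Hi Huy Hs Hal Hn.
    rewrite /alive Hu' in Hi.
    case: (leqP i f) => Hif.
      have Ha : alive phi u i by rewrite /alive Hu.
      rewrite Ha /sends Hu /= negb_imply in Hn; case/andP: Hn => /eqP Hfi /negbNE HyF.
      case Hyf: (faulty phi y).
        by move: (hdead _ (Hne _ Huy) Hyf); rewrite Hfi Hal.
      have : y \in [set y in F | ~~ faulty phi y] by rewrite inE HyF Hyf.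
      by rewrite HF inE => /eqP ->; rewrite Hfi.
    have Hi1 : i = f.+1 by apply/eqP; rewrite eqn_leq Hi Hif.
    by move: Hs; rewrite /sends Hu' Hi1 eqxx /= inE Huy.
  have hfg : f <= f.+1 <= f.+1 by rewrite leqnSn leqnn.
  have hg1 : f.+1 = 1 -> f = 1 by move=> [] H0; move: f0; rewrite H0.
  have [Ha Hb Hc] := finish e_sym Hu Hu' Hsame hlast hfg hg1 (leqnn _) hsu hstu
    Hw h_reach x R.-1.
  by split=> //; apply: leq_trans Ha H1.
- have hsu : forall i y, i <= f -> sends phi u i y -> sends phi' u i y.
    move=> i y Hi; rewrite /sends Hu Hu' => /implyP H.
    by apply/implyP => /H; rewrite !inE negb_and => ->; rewrite orbT.
  have hstu : forall i y, alive phi' u i -> e u y -> sends phi' u i y ->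
      alive phi' y i.+1 -> ~~ (alive phi u i && sends phi u i y) -> y = w /\ i.+1 = f.+1.
    move=> i y Hi Huy Hs _ Hn.
    rewrite /alive Hu' in Hi.
    have Ha : alive phi u i by rewrite /alive Hu.
    rewrite Ha /sends Hu /= negb_imply in Hn; case/andP: Hn => /eqP Hfi /negbNE HyF.
    move: Hs; rewrite /sends Hu' Hfi eqxx /= !inE HyF andbT negbK => /eqP ->.
    done.
  have hfg : f <= f <= f.+1 by rewrite leqnn leqnSn.
  have [Ha Hb Hc] := finish e_sym Hu Hu' Hsame hlast hfg (fun H => H) (leqnn _) hsu hstu
    Hw h_reach x R.-1.
  by split=> //; apply: leq_trans Ha H1.
Qed.
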